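(* Let $N=pq$ where $1<p\le q$ are primes (not necessarily distinct), with $N$ odd, let $M=(N-1)/2$, let $r$ be an integer with $0<r\le M$, and let $$L_0=\max\{k=p^{\ell}q^{m} : \ell,m\in\{0,1\},\ k\le r\}.$$ Then for every integer $L$ with $L_0\le L\le M$, the inverse problem $\mathrm{IP}(N,r,L)$ is uniquely solvable; that is, for any two distinct ${\tt x},{\tt y}\in\Omega(N,r)$ there is some $m\in\{1,\dots,L\}$ with $\tilde{x}_m\neq\tilde{y}_m$.
   Context: For a vector ${\tt v}=(v_1,\dots,v_N)$ of odd length $N>1$, its DFT coefficients are $\tilde{v}_m=\sum_{n=1}^N v_n e^{\mathrm{i}\xi m n}$ with $\xi=2\pi/N$. A vector is binary if its entries are $0$ or $1$; $\Omega(N,r)$ is the set of binary vectors of length $N$ with exactly $r$ ones. For $1\le L\le M$, two vectors ${\tt x},{\tt y}\in\Omega(N,r)$ are $L$-distinguishable if $\tilde{x}_m\neq\tilde{y}_m$ for some $m\in\{1,\dots,L\}$. The inverse problem $\mathrm{IP}(N,r,L)$ (recovering ${\tt x}\in\Omega(N,r)$ from $\tilde{x}_1,\dots,\tilde{x}_L$) is uniquely solvable if all pairs of distinct vectors in $\Omega(N,r)$ are $L$-distinguishable. *)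

(* Defs.v *)
From Stdlib Require Import Reals Arith List Bool ZArith Znumtheory.
From Coquelicot Require Import Coquelicot.
Import ListNotations.
Open Scope R_scope.

Definition cexpi (t : R) : C := (cos t, sin t).

(* A vector v = (v_1,...,v_N) is a list of length N; v_n = nth (n-1) v. *)
Fixpoint dft_from (v : list bool) (N m n : nat) : C :=
  match v with
  | nil => RtoC 0
  | b :: v' =>
      Cplus (Cmult (RtoC (if b then 1 else 0))
                   (cexpi (2 * PI / INR N * INR m * INR n)))
            (dft_from v' N m (S n))
  end.

(* DFT coefficient  ~v_m = sum_{n=1}^N v_n e^{i xi m n},  xi = 2 pi / N *)
Definition dft (v : list bool) (m : nat) : C := dft_from v (length v) m 1.

Definition Omega (N r : nat) (x : list bool) : Prop :=
  length x = N /\ count_occ bool_dec x true = r.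

Definition L_distinguishable (L : nat) (x y : list bool) : Prop :=
  exists m : nat, (1 <= m <= L)%nat /\ dft x m <> dft y m.

Definition IP_uniquely_solvable (N r L : nat) : Prop :=
  forall x y, Omega N r x -> Omega N r y -> x <> y -> L_distinguishable L x y.

Definition L0 (p q r : nat) : nat :=
  fold_right Nat.max 0%nat (filter (fun k => Nat.leb k r) [1%nat; p; q; (p * q)%nat]).

(* Main.v *)
Require Import Defs.
From Stdlib Require Import Reals Arith List Bool ZArith Znumtheory.
From Coquelicot Require Import Coquelicot.
From Stdlib Require Import Lia Lra Classical.
From mathcomp Require all_boot all_order all_algebra all_field.
From mathcomp Require zify lra Rstruct complex.

Definition theta (N : nat) : R := 2 * PI / INR N.

Lemma arg_eq N m n : 2 * PI / INR N * INR m * INR n = INR (m * n) * theta N.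
Proof. unfold theta; rewrite mult_INR; ring. Qed.

Lemma theta_full N : (0 < N)%nat -> INR N * theta N = 2 * PI.
Proof.
intros H; unfold theta.
assert (0 < INR N) by (apply lt_0_INR; lia).
field; lra.
Qed.

Lemma theta_range N k : (0 < k < N)%nat -> 0 < INR k * theta N < 2 * PI.
Proof.
intros H.
assert (HN : 0 < INR N) by (apply lt_0_INR; lia).
assert (Hk0 : 0 < INR k) by (apply lt_0_INR; lia).
assert (Hk : INR k < INR N) by (apply lt_INR; lia).
assert (HPI : 0 < PI) by exact PI_RGT_0.
unfold theta; split.
- apply Rmult_lt_0_compat; auto. unfold Rdiv; apply Rmult_lt_0_compat; [lra | apply Rinv_0_lt_compat; lra].
- apply (Rmult_lt_reg_r (INR N)); auto.
  replace (INR k * (2 * PI / INR N) * INR N) with (INR k * (2 * PI)) by (field; lra).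
  nra.
Qed.

Lemma cos_lt1 x : 0 < x < 2 * PI -> cos x <> 1.
Proof.
intros [h1 h2] hc.
assert (HPI : 0 < PI) by exact PI_RGT_0.
destruct (Rle_lt_dec x PI) as [h3 | h3].
- assert (cos x < cos 0) by (apply cos_decreasing_1; lra).
  rewrite cos_0 in H; lra.
- replace x with (2 * PI - (2 * PI - x)) in hc by ring.
  rewrite cos_minus, cos_2PI, sin_2PI in hc.
  assert (cos (2 * PI - x) < cos 0) by (apply cos_decreasing_1; lra).
  rewrite cos_0 in H; lra.
Qed.

Lemma fold_ge (l : list nat) k r : In k l -> (k <= r)%nat ->
  (k <= fold_right Nat.max 0 (filter (fun k => Nat.leb k r) l))%nat.
Proof.
induction l as [|a l IH]; simpl; intros H Hk; [contradiction|].
destruct H as [<-|H].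
- rewrite (proj2 (Nat.leb_le _ _) Hk); simpl; lia.
- destruct (Nat.leb a r); simpl; [specialize (IH H Hk); lia | auto].
Qed.

Module M.
Import all_boot all_order all_algebra all_field zify lra Rstruct complex.
Set Implicit Arguments. Unset Strict Implicit. Unset Printing Implicit Defensive.
Import Order.TTheory GRing.Theory Num.Theory.
Local Open Scope ring_scope.

Lemma map_Cyclotomic (F : fieldType) n (z : F) :
  n.-primitive_root z -> map_poly intr 'Phi_n = cyclotomic z n.
Proof.
elim/ltn_ind: n z => n IHn z prim_z.
have n_gt0 := prim_order_gt0 prim_z.
have [uDn _ inDn] := divisors_correct n_gt0.
pose q := \prod_(d <- rem n (divisors n)) 'Phi_d.
have Xn := prod_Cyclotomic n_gt0.
rewrite (big_rem n) ?inDn //= in Xn.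
have Xz := prod_cyclotomic prim_z.
rewrite (big_rem n) ?inDn //= divnn n_gt0 expr1 in Xz.
have Eq : map_poly (intr : int -> F) q =
   \prod_(d <- rem n (divisors n)) cyclotomic (z ^+ (n %/ d)) d.
  rewrite rmorph_prod /=; apply: eq_big_seq => d.
  rewrite mem_rem_uniq ?inE //= inDn => /andP[nd ddvn].
  rewrite (IHn d _ (z ^+ (n %/ d))) ?dvdn_prim_root //.
  by rewrite ltn_neqAle nd dvdn_leq.
have nz : map_poly (intr : int -> F) q != 0.
  apply: monic_neq0; apply: monic_map; rewrite monic_prod // => d _.
  exact: Cyclotomic_monic.
apply: (mulIf nz).
have -> : map_poly (intr : int -> F) 'Phi_n * map_poly intr q
          = map_poly intr ('Phi_n * q) by rewrite rmorphM.
rewrite Xn Eq -Xz rmorphB rmorph1 /= map_polyXn //.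
Qed.

Lemma minpoly_Phi n (u : algC) : n.-primitive_root u ->
  forall Q : {poly rat}, root (map_poly ratr Q) u = (map_poly intr 'Phi_n %| Q).
Proof.
move=> pu Q.
have [P [DP monP] HP] := minCpolyP u.
have EP : P = map_poly intr 'Phi_n.
  apply: (@map_inj_poly _ _ (ratr : rat -> algC)); first exact: fmorph_inj.
    by rewrite rmorph0.
  rewrite -DP (minCpoly_cyclotomic pu) -(map_Cyclotomic pu) -map_poly_comp.
  by apply: eq_map_poly => a /=; rewrite ratr_int.
by rewrite HP EP.
Qed.

Lemma gal (F : numFieldType) n (z z' : F) (D : {poly rat}) :
  n.-primitive_root z -> n.-primitive_root z' ->
  root (map_poly ratr D) z -> root (map_poly ratr D) z'.
Proof.
move=> pz pz' Dz.
pose Phi : {poly rat} := map_poly intr 'Phi_n.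
have EPhi : forall u : F, n.-primitive_root u -> map_poly ratr Phi = cyclotomic u n.
  move=> u pu; rewrite -(map_Cyclotomic pu) -map_poly_comp.
  by apply: eq_map_poly => a /=; rewrite ratr_int.
have Phiz : root (map_poly ratr Phi) z by rewrite (EPhi z pz) root_cyclotomic.
have [c0 | nc0] := boolP (coprimep Phi D).
  have /Bezout_coprimepP [[u v] /= Huv] := c0.
  have := Huv; rewrite -(eqp_map (ratr : {rmorphism rat -> F})) => /eqp_root H.
  have := H z; rewrite rmorph1 (negbTE (root1 z)) rmorphD !rmorphM /= rootE !hornerE.
  by rewrite (rootP Phiz) (rootP Dz) !mulr0 addr0 eqxx.
have n_gt0 := prim_order_gt0 pz.
have [u pu] := C_prim_root_exists n_gt0.
have [v rv] : exists v : algC, root (map_poly ratr (gcdp Phi D)) v.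
  by apply/closed_rootP; rewrite size_map_inj_poly ?rmorph0 //; exact: fmorph_inj.
have rPhi : root (map_poly ratr Phi) v.
  apply: root_dvdp rv; rewrite dvdp_map; exact: dvdp_gcdl.
have pv : n.-primitive_root v.
  have : map_poly (ratr : rat -> algC) Phi = cyclotomic u n.
    rewrite -(map_Cyclotomic pu) -map_poly_comp.
    by apply: eq_map_poly => a /=; rewrite ratr_int.
  by move=> E; rewrite E root_cyclotomic in rPhi.
have dPhi : Phi %| D.
  apply: dvdp_trans (dvdp_gcdr Phi D).
  by rewrite -(minpoly_Phi pv).
have /dvdpP [E ->] := dPhi.
by rewrite rmorphM rootM /= (EPhi z' pz') (root_cyclotomic pz') pz' orbT.
Qed.

Section Fourier.
Variables (F : numFieldType) (N : nat).

Definition Sf (f : nat -> rat) (z : F) := \sum_(k < N) ratr (f k) * z ^+ k.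

Lemma S_poly f z : Sf f z = (map_poly ratr (\poly_(k < N) f k)).[z].
Proof.
have -> : map_poly (ratr : rat -> F) (\poly_(k < N) f k) = \poly_(k < N) ratr (f k).
  by apply/polyP => i; rewrite coef_map /= !coef_poly; case: ifP => _; rewrite ?rmorph0.
by rewrite horner_poly.
Qed.

Lemma S_ext f g z : (forall k, (k < N)%N -> f k = g k) -> Sf f z = Sf g z.
Proof. by move=> H; apply: eq_bigr => k _; rewrite H. Qed.

Lemma S_add f g z : Sf (fun k => f k + g k) z = Sf f z + Sf g z.
Proof. by rewrite /Sf -big_split; apply: eq_bigr => k _; rewrite rmorphD mulrDl. Qed.

Lemma S_opp f z : Sf (fun k => - f k) z = - Sf f z.
Proof. by rewrite /Sf -sumrN; apply: eq_bigr => k _; rewrite rmorphN mulNr. Qed.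

Lemma S_scale c f z : Sf (fun k => c * f k) z = ratr c * Sf f z.
Proof. by rewrite /Sf mulr_sumr; apply: eq_bigr => k _; rewrite rmorphM mulrA. Qed.

Lemma S_sum m (f : 'I_m -> nat -> rat) z :
  Sf (fun k => \sum_(t < m) f t k) z = \sum_(t < m) Sf (f t) z.
Proof.
rewrite /Sf exchange_big /=; apply: eq_bigr => k _.
by rewrite rmorph_sum mulr_suml.
Qed.

Hypothesis N_gt0 : (0 < N)%N.

Lemma S_shift (f : nat -> rat) (z : F) s : z ^+ N = 1 ->
  z ^+ s * Sf (fun k => f ((k + s) %% N)%N) z = Sf f z.
Proof.
move=> zN.
rewrite /Sf mulr_sumr.
pose h (k : 'I_N) : 'I_N := Ordinal (ltn_pmod (k + s) N_gt0).
have hinj : injective h.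
  move=> a b /(congr1 val) /= /eqP; rewrite eqn_modDr !modn_small //.
  by move=> /eqP ab; apply: val_inj.
rewrite [RHS](reindex_inj hinj) /=; apply: eq_bigr => k _.
by rewrite mulrCA -exprD (expr_mod _ zN) addnC.
Qed.

Lemma S_shift_inv (f : nat -> rat) (z : F) s s' : z ^+ N = 1 -> z ^+ (s + s') = 1 ->
  Sf (fun k => f ((k + s) %% N)%N) z = z ^+ s' * Sf f z.
Proof.
move=> zN H; rewrite -(S_shift f s zN) mulrA -exprD addnC H mul1r //.
Qed.

Lemma geom_rev (u : F) n : u ^+ n = 1 ->
  (u - 1) * \sum_(t < n) u ^+ (n - t) = 0.
Proof.
move=> un.
have E : \sum_(t < n) u ^+ (n - t) * (u - 1) = u ^+ n.+1 - u.
  rewrite -(big_mkord xpredT (fun t => u ^+ (n - t) * (u - 1))).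
  rewrite (@telescope_sumr_eq _ 0%N n (fun t => - u ^+ (n.+1 - t))) //.
    by rewrite subSn // subnn subn0 expr1 opprK addrC.
  move=> k /andP[_ kn]; rewrite subSS opprK mulrBr mulr1 -exprSr.
  by rewrite (subSn (ltnW kn)) addrC.
by rewrite mulrC mulr_suml E exprS un mulr1 subrr.
Qed.

Variable w : F.
Hypothesis prim_w : N.-primitive_root w.

Lemma S_zero f : (forall j, (j < N)%N -> Sf f (w ^+ j) = 0) ->
  forall k, (k < N)%N -> f k = 0.
Proof.
move=> H k kN.
pose P : {poly F} := \poly_(k < N) ratr (f k).
have P0 : P = 0.
  apply/eqP; apply: contraT => nz.
  have := max_poly_roots nz (rs := [seq w ^+ j | j <- iota 0 N]).
  rewrite size_map size_iota.
  have -> : all (root P) [seq w ^+ j | j <- iota 0 N].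
    apply/allP => z /mapP [j]; rewrite mem_iota /= add0n => jN ->.
    by rewrite /root /P horner_poly -/(Sf f _) H.
  rewrite map_inj_in_uniq ?iota_uniq; last first.
    move=> i j; rewrite !mem_iota /= !add0n => iN jN /eqP.
    by rewrite (eq_prim_root_expr prim_w) !modn_small // => /eqP.
  move=> /(_ isT isT); rewrite ltnNge.
  by rewrite size_poly.
have := congr1 (fun p : {poly F} => p`_k) P0.
rewrite coef_poly kN coef0 => /eqP; rewrite fmorph_eq0 => /eqP //.
Qed.

End Fourier.

Lemma div_pq p q m : prime p -> prime q -> (m %| p * q)%N ->
  [\/ m = 1%N, m = p, m = q | m = (p * q)%N].
Proof.
move=> pp pq mdv.
have [_ Hq] := primeP pq.
have [pm | npm] := boolP (p %| m)%N.
  have p0 := prime_gt0 pp.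
  have Em : m = (p * (m %/ p))%N by rewrite mulnC divnK.
  move: mdv; rewrite {1}Em dvdn_pmul2l //.
  move=> /Hq /orP [] /eqP E.
    have Emp : m = p by rewrite Em E muln1.
    by apply: Or42.
  have Emp : m = (p * q)%N by rewrite Em E.
  by apply: Or44.
have cpm : coprime p m.
  rewrite (prime_coprime _ pp). exact: npm.
have cmp : coprime m p by rewrite coprime_sym.
move: mdv; rewrite (Gauss_dvdr _ cmp).
move=> /Hq /orP [] /eqP E.
  by apply: Or41.
by apply: Or43.
Qed.

Lemma classify (F : fieldType) p q N (z : F) : prime p -> prime q -> N = (p * q)%N ->
  z ^+ N = 1 ->
  [\/ z = 1, p.-primitive_root z, q.-primitive_root z | N.-primitive_root z].
Proof.
move=> pp pq EN zN.
have N0 : (0 < N)%N by rewrite EN muln_gt0 !prime_gt0.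
have [m pm mN] := prim_order_exists N0 zN.
rewrite EN in mN; case: (div_pq pp pq mN) => Em; subst m.
- by constructor 1; have := prim_expr_order pm; rewrite expr1.
- by constructor 2.
- by constructor 3.
- by constructor 4; rewrite EN.
Qed.

Lemma pos_sum_le (X : nat -> nat) N k c m : N = (m * c)%N -> (0 < c)%N ->
  (\sum_(t < m) X ((k + t * c) %% N)%N <= \sum_(j < N) X j)%N.
Proof.
move=> EN c0.
have N0 : (0 < N)%N -> True by [].
case: (posnP m) => [-> | m0]; first by rewrite big_ord0.
have Npos : (0 < N)%N by rewrite EN muln_gt0 m0 c0.
rewrite -(big_mkord xpredT (fun t => X ((k + t * c) %% N)%N)).
rewrite -(big_map (fun t => ((k + t * c) %% N)%N) xpredT X).
rewrite -(big_mkord xpredT X).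
apply: (@uniq_sub_le_big nat addn leq leqnn (fun x y => leq_addr y x) 0%N); last first.
- move=> j /mapP [t _ ->]; rewrite mem_index_iota /= ltn_pmod //.
- exact: iota_uniq.
rewrite map_inj_in_uniq ?iota_uniq //.
move=> a b; rewrite !mem_index_iota /= => am bm /eqP.
rewrite eqn_modDl EN -!muln_modl !modn_small // eqn_pmul2r // => /eqP //.
Qed.


Section NatC.
Local Open Scope nat_scope.
Lemma natC p q N Tx Ty Ux Uy r : coprime p q -> N = p * q -> 0 < p -> r < p -> p <= q ->
  Tx <= r -> Ux <= r -> Uy <= r ->
  N + p * Ty + q * Uy = p * Tx + q * Ux -> False.
Proof.
move=> cpq EN p0 rp pq Txr Uxr Uyr E.
have E2 : p * (q + Ty) + q * Uy = p * Tx + q * Ux by rewrite mulnDr -EN.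
have EU : Ux = Uy.
  case: (leqP Uy Ux) => H.
    have d1 : p %| q * (Ux - Uy).
      have E3 : q * (Ux - Uy) = p * (q + Ty - Tx).
        rewrite !mulnBr. lia.
      rewrite E3. exact: dvdn_mulr.
    rewrite (Gauss_dvdr _ cpq) in d1.
    have : Ux - Uy = 0.
      apply/eqP; apply: contraT => nz; have := dvdn_leq _ d1; rewrite lt0n nz => /(_ isT); lia.
    lia.
  have d1 : p %| q * (Uy - Ux).
    have E3 : q * (Uy - Ux) = p * (Tx - (q + Ty)).
      rewrite !mulnBr. lia.
    rewrite E3. exact: dvdn_mulr.
  rewrite (Gauss_dvdr _ cpq) in d1.
  have : Uy - Ux = 0.
    apply/eqP; apply: contraT => nz; have := dvdn_leq _ d1; rewrite lt0n nz => /(_ isT); lia.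
  lia.
subst Uy.
have : p * (q + Ty) = p * Tx by lia.
move/eqP; rewrite eqn_pmul2l // => /eqP; lia.
Qed.
End NatC.


Lemma d_eq (a b c e : nat) : ((a%:R - b%:R : rat) = c%:R - e%:R) -> (a + e = c + b)%N.
Proof.
move=> H; apply/eqP; rewrite -(eqr_nat rat) !natrD; apply/eqP; lra.
Qed.

Lemma sum_const1 (m : nat) : (\sum_(t < m) 1 = m)%N.
Proof. by rewrite sum1_card card_ord. Qed.

Lemma core (F : numFieldType) (p q N r L : nat) (w : F) (X Y : nat -> nat) :
  prime p -> prime q -> (p <= q)%N -> N = (p * q)%N -> N.-primitive_root w ->
  (forall k, X k <= 1)%N -> (forall k, Y k <= 1)%N ->
  (\sum_(k < N) X k)%N = r -> (\sum_(k < N) Y k)%N = r ->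
  (1 <= L)%N -> ((p <= r)%N -> (p <= L)%N) -> ((q <= r)%N -> (q <= L)%N) ->
  (forall m, (1 <= m <= L)%N ->
     \sum_(k < N) (X k)%:R * w ^+ (m * k.+1) = \sum_(k < N) (Y k)%:R * w ^+ (m * k.+1)) ->
  forall k, (k < N)%N -> X k = Y k.
Proof.
move=> pp pq pleq EN pw X1 Y1 SX SY L1 HpL HqL Hdft.
have p0 := prime_gt0 pp; have q0 := prime_gt0 pq.
have N0 : (0 < N)%N by rewrite EN muln_gt0 p0 q0.
pose d (k : nat) : rat := (X k)%:R - (Y k)%:R.
have wN : w ^+ N = 1 := prim_expr_order pw.
have nz1 : forall z : F, z ^+ N = 1 -> z != 0.
  move=> z zN; apply/eqP => z0; move: zN; rewrite z0 expr0n eqn0Ngt N0 /=.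
  by move=> /eqP; rewrite eq_sym oner_eq0.
have wjN : forall j, (w ^+ j) ^+ N = 1 by move=> j; rewrite exprAC wN expr1n.
have Vm : forall m, (1 <= m <= L)%N -> Sf N d (w ^+ m) = 0.
  move=> m mL.
  have := Hdft m mL; move/eqP; rewrite -subr_eq0 -sumrB => /eqP E.
  have E' : w ^+ m * Sf N d (w ^+ m) = 0.
    rewrite /Sf mulr_sumr -[RHS]E; apply: eq_bigr => k _.
    rewrite rmorphB /= !ratr_nat mulrCA -exprS -exprM -mulrBl.
    done.
  by apply/eqP; move/eqP: E'; rewrite mulf_eq0 (negbTE (nz1 _ (wjN m))).
pose Dp : {poly rat} := \poly_(k < N) d k.
have V1 : Sf N d (1 : F) = 0.
  rewrite /Sf; under eq_bigr => k _ do rewrite expr1n mulr1 rmorphB /= !ratr_nat.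
  by rewrite sumrB -!natr_sum SX SY subrr.
have VN : forall z : F, N.-primitive_root z -> Sf N d z = 0.
  move=> z pz; apply/eqP; rewrite S_poly; apply: (gal pw pz).
  by rewrite /root -S_poly -[w]expr1 Vm ?L1.
have Vq : (p <= L)%N -> forall z : F, q.-primitive_root z -> Sf N d z = 0.
  move=> pL z pz.
  have pwq : q.-primitive_root (w ^+ p).
    have := dvdn_prim_root pw (_ : (q %| N)%N); rewrite {2}EN mulnK //.
    by apply; rewrite EN dvdn_mull.
  apply/eqP; rewrite S_poly; apply: (gal pwq pz).
  by rewrite /root -S_poly Vm ?pL ?p0.
have Vp : (q <= L)%N -> forall z : F, p.-primitive_root z -> Sf N d z = 0.
  move=> qL z pz.
  have pwp : p.-primitive_root (w ^+ q).
    have := dvdn_prim_root pw (_ : (p %| N)%N); rewrite {2}EN mulKn //.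
    by apply; rewrite EN dvdn_mulr.
  apply/eqP; rewrite S_poly; apply: (gal pwp pz).
  by rewrite /root -S_poly Vm ?qL ?q0.
have dXY : forall k, d k = 0 -> X k = Y k.
  by move=> k /eqP; rewrite subr_eq0 eqr_nat => /eqP.
case: (leqP q r) => [qr | rq].
  have qL := HqL qr; have pL := HpL (leq_trans pleq qr).
  move=> k kN; apply: dXY; apply: (S_zero pw) => // j _.
  case: (classify pp pq EN (wjN j)) => [-> | pz | pz | pz].
  - exact: V1.
  - exact: Vp.
  - exact: Vq.
  - exact: VN.
have caseB : (forall z : F, z ^+ N = 1 -> z ^+ p != 1 -> Sf N d z = 0) ->
    forall k, (k < N)%N -> X k = Y k.
  move=> Vz.
  pose g k := d ((k + p) %% N)%N - d k.
  have Sg : forall j, (j < N)%N -> Sf N g (w ^+ j) = 0.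
    move=> j _; set z := w ^+ j; have zN := wjN j.
    rewrite /g S_add S_opp.
    have Sh := S_shift N0 d p zN.
    case: (eqVneq (z ^+ p) 1) => zp.
      by rewrite zp mul1r in Sh; rewrite Sh subrr.
    have Sd := Vz z zN zp.
    rewrite Sd in Sh; move/eqP: Sh; rewrite mulf_eq0 expf_eq0 (negbTE (nz1 _ zN)) andbF /=.
    by move=> /eqP ->; rewrite Sd oppr0 addr0.
  have g0 := S_zero pw Sg.
  have per : forall t k, (k < N)%N -> d ((k + t * p) %% N)%N = d k.
    elim=> [|t IH] k kN; first by rewrite mul0n addn0 modn_small.
    have := g0 _ (ltn_pmod (k + t * p) N0); rewrite /g => /eqP; rewrite subr_eq0 => /eqP.
    by rewrite modnDml -addnA -mulSnr => ->; rewrite IH.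
  move=> k kN; apply/eqP; apply: contraT => neq.
  have [[Xk Yk] | [Xk Yk]] : (X k = 1 /\ Y k = 0)%N \/ (X k = 0 /\ Y k = 1)%N.
    by have := X1 k; have := Y1 k; lia.
  - have Xt : forall t, X ((k + t * p) %% N)%N = 1%N.
      move=> t; have := per t k kN; rewrite /d Xk Yk => /d_eq.
      by have := X1 ((k + t * p) %% N)%N; have := Y1 ((k + t * p) %% N)%N; lia.
    have := pos_sum_le X k (_ : N = (q * p)%N) p0; rewrite SX.
    under eq_bigr => t _ do rewrite Xt.
    by rewrite sum_const1 => /(_ _); rewrite mulnC => /(_ EN); lia.
  - have Yt : forall t, Y ((k + t * p) %% N)%N = 1%N.
      move=> t; have := per t k kN; rewrite /d Xk Yk => /d_eq.
      by have := X1 ((k + t * p) %% N)%N; have := Y1 ((k + t * p) %% N)%N; lia.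
    have := pos_sum_le Y k (_ : N = (q * p)%N) p0; rewrite SY.
    under eq_bigr => t _ do rewrite Yt.
    by rewrite sum_const1 => /(_ _); rewrite mulnC => /(_ EN); lia.
have [pr | rp] := leqP p r.
  apply: caseB => z zN zp.
  case: (classify pp pq EN zN) => [z1 | pz | pz | pz].
  - by move: zp; rewrite z1 expr1n eqxx.
  - by move: zp; rewrite prim_expr_order ?eqxx.
  - exact: Vq (HpL pr) z pz.
  - exact: VN.
have [epq | npq] := eqVneq p q.
  apply: caseB => z zN zp.
  case: (classify pp pq EN zN) => [z1 | pz | pz | pz].
  - by move: zp; rewrite z1 expr1n eqxx.
  - by move: zp; rewrite prim_expr_order ?eqxx.
  - by move: zp; rewrite epq prim_expr_order ?eqxx.
  - exact: VN.
have cpq : coprime p q by rewrite prime_coprime // dvdn_prime2 // npq.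
have nqp : q != p by rewrite eq_sym.
pose T k := \sum_(t < q) d ((k + t * p) %% N)%N.
pose U k := \sum_(t < p) d ((k + t * q) %% N)%N.
pose h k := N%:R * d k - p%:R * T k - q%:R * U k.
have ST : forall z : F, z ^+ N = 1 -> Sf N T z = (\sum_(t < q) (z ^+ p) ^+ (q - t)) * Sf N d z.
  move=> z zN; rewrite /T S_sum mulr_suml; apply: eq_bigr => t _.
  rewrite (S_shift_inv (s' := ((q - t) * p)%N) N0 d zN); last first.
    by rewrite -mulnDl subnKC; [rewrite mulnC -EN | exact: ltnW (ltn_ord t)].
  by rewrite mulnC exprM.
have SU : forall z : F, z ^+ N = 1 -> Sf N U z = (\sum_(t < p) (z ^+ q) ^+ (p - t)) * Sf N d z.
  move=> z zN; rewrite /U S_sum mulr_suml; apply: eq_bigr => t _.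
  rewrite (S_shift_inv (s' := ((p - t) * q)%N) N0 d zN); last first.
    by rewrite -mulnDl subnKC; [rewrite -EN | exact: ltnW (ltn_ord t)].
  by rewrite mulnC exprM.
have Sh : forall j, (j < N)%N -> Sf N h (w ^+ j) = 0.
  move=> j _; have zN := wjN j; move: (w ^+ j) zN => z zN.
  rewrite /h S_add S_opp S_add S_opp !S_scale !ratr_nat ST // SU //.
  case: (classify pp pq EN zN) => [z1 | pz | pz | pz].
  - by rewrite z1 V1 !mulr0 !subr0.
  - have zp := prim_expr_order pz.
    have zq : z ^+ q != 1 by rewrite -(prim_order_dvd pz) dvdn_prime2.
    have B0 : \sum_(t < p) (z ^+ q) ^+ (p - t) = 0.
      have := geom_rev (u := z ^+ q) (n := p); rewrite -exprM mulnC -EN zN => /(_ erefl).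
      by move/eqP; rewrite mulf_eq0 subr_eq0 (negbTE zq) /= => /eqP.
    rewrite B0 zp; under eq_bigr => t _ do rewrite expr1n.
    rewrite sumr_const card_ord mul0r mulr0 subr0 mulrA -natrM -EN.
    by rewrite -mulr_natl subrr.
  - have zq := prim_expr_order pz.
    have zp : z ^+ p != 1 by rewrite -(prim_order_dvd pz) dvdn_prime2.
    have A0 : \sum_(t < q) (z ^+ p) ^+ (q - t) = 0.
      have := geom_rev (u := z ^+ p) (n := q); rewrite -exprM -EN zN => /(_ erefl).
      by move/eqP; rewrite mulf_eq0 subr_eq0 (negbTE zp) /= => /eqP.
    rewrite A0 zq; under eq_bigr => t _ do rewrite expr1n.
    rewrite sumr_const card_ord mul0r mulr0 subr0 mulrA -natrM mulnC -EN.
    by rewrite -mulr_natl subrr.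
  - by rewrite (VN _ pz) !mulr0 !subr0.
have h0 := S_zero pw Sh.
move=> k kN; apply/eqP; apply: contraT => neq.
pose Tx := (\sum_(t < q) X ((k + t * p) %% N)%N)%N.
pose Ty := (\sum_(t < q) Y ((k + t * p) %% N)%N)%N.
pose Ux := (\sum_(t < p) X ((k + t * q) %% N)%N)%N.
pose Uy := (\sum_(t < p) Y ((k + t * q) %% N)%N)%N.
have ETk : T k = Tx%:R - Ty%:R by rewrite /T /d sumrB /Tx /Ty !natr_sum.
have EUk : U k = Ux%:R - Uy%:R by rewrite /U /d sumrB /Ux /Uy !natr_sum.
have NpqE : N = (q * p)%N by rewrite mulnC.
have Txr : (Tx <= r)%N by rewrite -SX; exact: pos_sum_le.
have Tyr : (Ty <= r)%N by rewrite -SY; exact: pos_sum_le.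
have Uxr : (Ux <= r)%N by rewrite -SX; exact: pos_sum_le.
have Uyr : (Uy <= r)%N by rewrite -SY; exact: pos_sum_le.
have E : (N * X k + p * Ty + q * Uy = N * Y k + p * Tx + q * Ux)%N.
  apply/eqP; rewrite -(eqr_nat rat) !natrD !natrM; apply/eqP.
  have := h0 k kN; rewrite /h ETk EUk /d; lra.
have [[Xk Yk] | [Xk Yk]] : (X k = 1 /\ Y k = 0)%N \/ (X k = 0 /\ Y k = 1)%N.
  by have := X1 k; have := Y1 k; lia.
- rewrite Xk Yk muln1 muln0 add0n in E.
  by case: (natC cpq EN p0 rp pleq Txr Uxr Uyr E).
- rewrite Xk Yk muln1 muln0 add0n in E.
  by case: (natC cpq EN p0 rp pleq Tyr Uyr Uxr (esym E)).
Qed.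

Definition CC := (R[i])%type.
Definition toCC (z : C) : CC := (fst z +i* snd z)%C.
Definition e (t : R) : CC := (cos t +i* sin t)%C.

Lemma toCC_add a b : toCC (Cplus a b) = toCC a + toCC b.
Proof. by case: a => a1 a2; case: b => b1 b2. Qed.

Lemma toCC_mul a b : toCC (Cmult a b) = toCC a * toCC b.
Proof. by case: a => a1 a2; case: b => b1 b2. Qed.

Lemma e_add a b : e a * e b = e (Rplus a b).
Proof.
rewrite /e /=; congr (_ +i* _)%C.
  by rewrite cos_plus.
by rewrite sin_plus RplusE addrC.
Qed.

Lemma e_pow a k : e a ^+ k = e (Rmult (INR k) a).
Proof.
elim: k => [|k IH].
  rewrite expr0 /e Rmult_0_l cos_0 sin_0 //.
by rewrite exprS IH e_add S_INR; congr e; ring.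
Qed.


Lemma toCC_cexpi t : toCC (cexpi t) = e t.
Proof. by []. Qed.

Lemma toCC_dft_from v N m n :
  toCC (dft_from v N m n) =
  \sum_(k < size v) (nth false v k : nat)%:R * (e (theta N)) ^+ (m * (n + k)).
Proof.
elim: v n => [|b v IH] n /=.
  by rewrite big_ord0.
rewrite toCC_add toCC_mul IH big_ord_recl /= addn0 toCC_cexpi arg_eq -e_pow.
congr (_ * _ + _).
  by case: b.
by apply: eq_bigr => k _; rewrite addSnnS.
Qed.

Lemma count_sum (l : list bool) :
  count_occ bool_dec l true = (\sum_(k < size l) (nth false l k : nat))%N.
Proof.
elim: l => [|b l IH] /=; first by rewrite big_ord0.
rewrite big_ord_recl /= -IH.
by case: b => /=.
Qed.

Lemma length_size (T : Type) (l : list T) : length l = size l.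
Proof. by elim: l => //= a l ->. Qed.

Lemma primeZ p : Znumtheory.prime (Z.of_nat p) -> prime p.
Proof.
move=> Pp; apply/primeP; split.
  have := Znumtheory.prime_ge_2 _ Pp; move=> H; lia.
move=> d /dvdnP [k Ek].
have : (Z.of_nat d | Z.of_nat p)%Z.
  by exists (Z.of_nat k); rewrite Ek Nat2Z.inj_mul.
move=> /(Znumtheory.prime_divisors _ Pp) H.
case: H => [H | [H | [H | H]]]; lia.
Qed.

Lemma prim_w N : (0 < N)%N -> N.-primitive_root (e (theta N)).
Proof.
move=> N0.
have wN : e (theta N) ^+ N = 1.
  rewrite e_pow theta_full; last by apply/ssrnat.ltP.
  by rewrite /e cos_2PI sin_2PI.
have [m pm mN] := prim_order_exists N0 wN.
have m0 := prim_order_gt0 pm.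
have mleN := dvdn_leq N0 mN.
suff E : m = N by rewrite E in pm.
apply/eqP; rewrite eqn_leq mleN /=; apply: contraT; rewrite -ltnNge => mN'.
have := prim_expr_order pm; rewrite e_pow /e => /(congr1 (@complex.Re _)) /= H.
have : (Peano.lt 0 m /\ Peano.lt m N) by split; apply/ssrnat.ltP.
by move=> /theta_range /cos_lt1.
Qed.

Lemma main_aux (p q N r L : nat) :
  Znumtheory.prime (Z.of_nat p) -> Znumtheory.prime (Z.of_nat q) ->
  Peano.le p q -> N = Nat.mul p q -> Peano.le 1 L ->
  (Peano.le p r -> Peano.le p L) -> (Peano.le q r -> Peano.le q L) ->
  IP_uniquely_solvable N r L.
Proof.
move=> Pp Pq pq EN L1 HpL HqL x y [Lx Cx] [Ly Cy] neq.
apply: NNPP => nd.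
have Hm : forall m, (1 <= m <= L)%N -> dft x m = dft y m.
  move=> m /andP [m1 mL]; apply: NNPP => ne; apply: nd; exists m; split=> //.
  by split; apply/ssrnat.leP.
apply: neq.
have pp := primeZ Pp; have pq' := primeZ Pq.
have EN' : N = (p * q)%N by [].
have N0 : (0 < N)%N by rewrite EN' muln_gt0 !prime_gt0.
pose X k := nat_of_bool (nth false x k).
pose Y k := nat_of_bool (nth false y k).
have Sx : size x = N by rewrite -length_size.
have Sy : size y = N by rewrite -length_size.
have XY := @core CC p q N r L (e (theta N)) X Y pp pq' (introT ssrnat.leP pq) EN' (prim_w N0)
  (fun k => leq_b1 _) (fun k => leq_b1 _).
have SX : (\sum_(k < N) X k)%N = r by rewrite -Sx -count_sum.
have SY : (\sum_(k < N) Y k)%N = r by rewrite -Sy -count_sum.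
have := XY SX SY (introT ssrnat.leP L1)
  (fun h => introT ssrnat.leP (HpL (elimT ssrnat.leP h))) (fun h => introT ssrnat.leP (HqL (elimT ssrnat.leP h))).
move=> /(_ _) XY'.
apply: (@eq_from_nth _ false); first by rewrite Sx Sy.
move=> k; rewrite Sx => kN.
have : X k = Y k.
  apply: XY' => // m mL.
  have := congr1 toCC (Hm m mL).
  rewrite /dft !toCC_dft_from !length_size Sx Sy.
  by under eq_bigr => i _ do rewrite add1n; under [RHS]eq_bigr => i _ do rewrite add1n.
by rewrite /X /Y; case: (nth false x k); case: (nth false y k).
Qed.
End M.

Theorem theorem2 (p q N r L : nat) :
  prime (Z.of_nat p) -> prime (Z.of_nat q) -> (1 < p <= q)%nat ->
  N = (p * q)%nat -> Nat.Odd N ->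
  (0 < r <= (N - 1) / 2)%nat ->
  (L0 p q r <= L <= (N - 1) / 2)%nat ->
  IP_uniquely_solvable N r L.
Proof.
intros Pp Pq [p1 pq] EN Odd [r0 rM] [HL LM].
apply (M.main_aux Pp Pq pq EN).
- assert (H : (1 <= L0 p q r)%nat) by (apply fold_ge; simpl; auto; lia). lia.
- intros H. assert (H' : (p <= L0 p q r)%nat) by (apply fold_ge; simpl; auto). lia.
- intros H. assert (H' : (q <= L0 p q r)%nat) by (apply fold_ge; simpl; auto). lia.
Qed.
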